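(* Let $h>0$, $0\le\alpha<1/4$, $g=(0,0)$, $t=\dfrac{2h}{\tan(\pi/4-\alpha)}$, $s_p=(-t/2,h)$ and $s_q=(t/2,h)$. Then the worst-case uncertainty of this pair satisfies $$\varepsilon(g,\{s_p,s_q\})\;\le\;\sqrt{\frac{1+2\alpha}{1-4\alpha}}\cdot\frac{2h\sin(2\alpha)}{1-\sin(2\alpha)}.$$
   Context: Work in $\mathbb{R}^2$ with coordinates $(x,z)$. The ground line is $G=\{z=0\}$ and the viewing line is $S=\{z=h\}$, $h>0$. Fix $\alpha>0$. For a point $s$ and a unit vector $u$, the wedge $W(s,u)=\{s+rv:\ r\ge 0,\ |v|=1,\ \angle(v,u)\le\alpha\}$ (apex $s$, opening angle $2\alpha$). For a target $g$ and camera location $s$, $\mathcal W(g,s)$ is the set of all wedges $W(s,u)$ containing $g$. For $C\subseteq S$, $\varepsilon(g,C)=\sup\{\operatorname{diam}(\bigcap_{s\in C}W_s): W_s\in\mathcal W(g,s)\ \forall s\in C\}$. *)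

(* Defs.v *)
From Stdlib Require Import Reals Lra.
Open Scope R_scope.

Definition point := (R * R)%type.

Definition padd (p q : point) : point := (fst p + fst q, snd p + snd q).
Definition pscale (r : R) (p : point) : point := (r * fst p, r * snd p).
Definition dot (p q : point) : R := fst p * fst q + snd p * snd q.
Definition norm (p : point) : R := sqrt (dot p p).
Definition dist (p q : point) : R := norm (padd p (pscale (-1) q)).
Definition unit_vec (u : point) : Prop := norm u = 1.

Definition angle (v u : point) : R := acos (dot v u).

Definition wedge (alpha : R) (s u : point) (p : point) : Prop :=
  exists r v, 0 <= r /\ unit_vec v /\ angle v u <= alpha /\ p = padd s (pscale r v).

Definition on_view_line (h : R) (s : point) : Prop := snd s = h.

Definition diam_le (A : point -> Prop) (d : R) : Prop :=
  forall x y, A x -> A y -> dist x y <= d.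

(* eps(g, C) <= B: for every choice of wedges W_s = W(s, u s) in the family
   \mathcal W(g,s) (i.e. u s a unit vector and g in W(s, u s)) for s in C,
   the diameter of the intersection of the W_s over s in C is at most B.
   This is exactly "sup {...} <= B". *)
Definition eps_le (alpha : R) (g : point) (C : point -> Prop) (B : R) : Prop :=
  forall u : point -> point,
    (forall s, C s -> unit_vec (u s) /\ wedge alpha s (u s) g) ->
    diam_le (fun p => forall s, C s -> wedge alpha s (u s) p) B.

(* Main.v *)
Require Import Defs.
From Stdlib Require Import Reals Lra Psatz.
Open Scope R_scope.


Lemma ell_up (k m a b C S rho : R) :
  k*k+m*m=1 -> 0<=m -> m<=k -> 0<=a -> k*b <= m*a -> -(k*b) <= m*a ->
  0<=C -> k*S <= m*C -> -(k*S) <= m*C -> a*a+b*b <= rho*rho -> 0<=rho ->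
  a*S - b*C <= rho*(S*k + C*m) /\ -(rho*(C*m - S*k)) <= a*S - b*C.
Proof.
  intros Hkm Hm Hmk Ha Hb1 Hb2 HC HS1 HS2 Hr Hr0.
  assert (Ek: (a*k - b*m)*(a*k-b*m) <= rho*rho).
  { assert ((a*k - b*m)*(a*k-b*m) + (a*m+b*k)*(a*m+b*k) = (a*a+b*b)*(k*k+m*m)) by ring. nra. }
  assert (Ek2: (a*k + b*m)*(a*k+b*m) <= rho*rho).
  { assert ((a*k + b*m)*(a*k+b*m) + (a*m-b*k)*(a*m-b*k) = (a*a+b*b)*(k*k+m*m)) by ring. nra. }
  assert (e1: a*k - b*m <= rho) by nra.
  assert (e2: a*k + b*m <= rho) by nra.
  assert (k0 : 0 < k) by nra.
  assert (mm: m*m*C <= k*k*C) by (apply Rmult_le_compat_r; nra).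
  assert (r1: S*m - C*k <= 0).
  { assert (m*(k*S) <= m*(m*C)) by (apply Rmult_le_compat_l; lra).
    assert (k*(S*m - C*k) <= 0) by nra. nra. }
  assert (r2: 0 <= S*m + C*k).
  { assert (m*(-(k*S)) <= m*(m*C)) by (apply Rmult_le_compat_l; lra).
    assert (0 <= k*(S*m + C*k)) by nra. nra. }
  assert (id1: (a*S - b*C)*(k*k+m*m) = (S*k + C*m)*(a*k - b*m) + (S*m - C*k)*(a*m+b*k)) by ring.
  assert (id2: (a*S - b*C)*(k*k+m*m) = -(C*m - S*k)*(a*k + b*m) + (S*m + C*k)*(a*m-b*k)) by ring.
  rewrite Hkm, Rmult_1_r in id1, id2.
  split; nra.
Qed.

Lemma ell_diff (k m a1 b1 a2 b2 C S rho : R) :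
  k*k+m*m=1 -> 0<=m -> m<=k ->
  0<=a1 -> k*b1 <= m*a1 -> -(k*b1) <= m*a1 ->
  0<=a2 -> k*b2 <= m*a2 -> -(k*b2) <= m*a2 ->
  0<=C -> k*S <= m*C -> -(k*S) <= m*C ->
  a1*a1+b1*b1 <= rho*rho -> a2*a2+b2*b2 <= rho*rho -> 0<=rho ->
  ((a2*S - b2*C) - (a1*S - b1*C))^2 <= 4*(m*m)*(rho*rho)*(C*C+S*S).
Proof.
  intros. destruct (ell_up k m a1 b1 C S rho) as [u1 l1]; auto.
  destruct (ell_up k m a2 b2 C S rho) as [u2 l2]; auto.
  set (d := (a2*S - b2*C) - (a1*S - b1*C)).
  assert (d <= 2*C*m*rho) by (unfold d; nra).
  assert (-(2*C*m*rho) <= d) by (unfold d; nra).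
  assert (0 <= 2*C*m*rho) by (apply Rmult_le_pos; [nra|lra]).
  assert (d^2 <= (2*C*m*rho)^2) by nra.
  nra.
Qed.

Lemma cone (k m a b C S : R) :
  k*k+m*m=1 -> 0<=m -> m<=k -> 0<=a -> k*b <= m*a -> -(k*b) <= m*a ->
  0<=C -> k*S <= m*C -> -(k*S) <= m*C ->
  (k*k-m*m)*(a*S - b*C) <= 2*k*m*(a*C+b*S) /\
  -((k*k-m*m)*(a*S - b*C)) <= 2*k*m*(a*C+b*S) /\ 0 <= a*C+b*S.
Proof.
  intros Hkm Hm Hmk Ha Hb1 Hb2 HC HS1 HS2.
  assert (k0 : 0 < k) by nra.
  assert (P1: 0 <= m*a - k*b) by lra.
  assert (P2: 0 <= m*a + k*b) by lra.
  assert (Q1: 0 <= m*C + k*S) by lra.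
  assert (Q2: 0 <= m*C - k*S) by lra.
  assert (R1: 0 <= k*a + m*b).
  { assert (m*(-(k*b)) <= m*(m*a)) by (apply Rmult_le_compat_l; lra).
    assert (m*m*a <= k*k*a) by (apply Rmult_le_compat_r; nra). nra. }
  assert (R2: 0 <= k*a - m*b).
  { assert (m*((k*b)) <= m*(m*a)) by (apply Rmult_le_compat_l; lra).
    assert (m*m*a <= k*k*a) by (apply Rmult_le_compat_r; nra). nra. }
  assert (T1: 0 <= k*C + m*S).
  { assert (m*(-(k*S)) <= m*(m*C)) by (apply Rmult_le_compat_l; lra).
    assert (m*m*C <= k*k*C) by (apply Rmult_le_compat_r; nra). nra. }
  assert (T2: 0 <= k*C - m*S).
  { assert (m*((k*S)) <= m*(m*C)) by (apply Rmult_le_compat_l; lra).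
    assert (m*m*C <= k*k*C) by (apply Rmult_le_compat_r; nra). nra. }
  split; [|split].
  - assert (2*k*m*(a*C+b*S) - (k*k-m*m)*(a*S - b*C) = (m*a+k*b)*(k*C + m*S) + (k*a - m*b)*(m*C-k*S)) by ring.
    nra.
  - assert (2*k*m*(a*C+b*S) + (k*k-m*m)*(a*S - b*C) = (m*a-k*b)*(k*C - m*S) + (k*a + m*b)*(m*C+k*S)) by ring.
    nra.
  - assert (E: (m*a-k*b)*(m*C-k*S) + (m*a+k*b)*(m*C+k*S) = 2*(m*m)*(a*C) + 2*(k*k)*(b*S)) by ring.
    assert (0 <= (m*a-k*b)*(m*C-k*S)) by (apply Rmult_le_pos; lra).
    assert (0 <= (m*a+k*b)*(m*C+k*S)) by (apply Rmult_le_pos; lra).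
    assert (m*m*(a*C) <= k*k*(a*C)) by (apply Rmult_le_compat_r; nra).
    assert (0 <= k*k*(a*C+b*S)) by nra.
    nra.
Qed.

Lemma rho_b (L h X Y X' : R) : 0<h -> h <= L -> X + X' = 2*L ->
 2*L*h*(L*Y - h*X) <= (L*L-h*h)*(L*X+h*Y) ->
 -(2*L*h*(L*Y - h*X)) <= (L*L-h*h)*(L*X+h*Y) -> 0 <= L*X+h*Y ->
 2*L*h*(L*Y - h*X') <= (L*L-h*h)*(L*X'+h*Y) ->
 h*h*(X*X+Y*Y) <= L*L*(L*L+h*h).
Proof.
  intros Hh HL HX c1 c2 c3 c4.
  assert (D0: 0 < L*L+h*h) by nra.
  assert (F: 0 <= L*X - h*Y).
  { assert ((L*L+h*h)*(L*X - h*Y) = (L*L-h*h)*(L*X+h*Y) - 2*L*h*(L*Y-h*X)) by ring.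
    assert (0 <= (L*L+h*h)*(L*X - h*Y)) by lra. nra. }
  assert (Fq: 0 <= L*X' - h*Y).
  { assert ((L*L+h*h)*(L*X' - h*Y) = (L*L-h*h)*(L*X'+h*Y) - 2*L*h*(L*Y-h*X')) by ring.
    assert (0 <= (L*L+h*h)*(L*X' - h*Y)) by lra. nra. }
  assert (F2: 0 <= (L*L-h*h)*(L*X+h*Y) + 2*L*h*(L*Y - h*X)) by lra.
  assert (Phi: (L*L+h*h)*((L*X+h*Y)*(L*X+h*Y)) - 4*(h*h)*(L*L)*(X*X+Y*Y)
     = (L*X-h*Y)*((L*L-h*h)*(L*X+h*Y) + 2*L*h*(L*Y - h*X))) by ring.
  assert (P0: 0 <= (L*X-h*Y)*((L*L-h*h)*(L*X+h*Y) + 2*L*h*(L*Y - h*X))) by (apply Rmult_le_pos; lra).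
  assert (U: L*X + h*Y <= 2*(L*L)) by nra.
  assert (U2: (L*X+h*Y)*(L*X+h*Y) <= (2*(L*L))*(2*(L*L))) by nra.
  assert (4*(L*L)*(h*h*(X*X+Y*Y)) <= 4*(L*L)*(L*L*(L*L+h*h))) by nra.
  assert (0 < 4*(L*L)) by nra.
  nra.
Qed.


Lemma unit_sq (u : point) : unit_vec u -> fst u * fst u + snd u * snd u = 1.
Proof.
  unfold unit_vec, norm, dot. intros H.
  assert (0 <= fst u * fst u + snd u * snd u) by nra.
  rewrite <- (sqrt_sqrt _ H0), H. ring.
Qed.

Lemma lin_wedge (alpha : R) (s u z : point) :
  0 <= alpha -> alpha <= PI -> 0 <= cos alpha -> 0 <= sin alpha ->
  fst u * fst u + snd u * snd u = 1 -> wedge alpha s u z ->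
  0 <= (fst z - fst s)*fst u + (snd z - snd s)*snd u /\
  cos alpha * (-((fst z - fst s)*snd u) + (snd z - snd s)*fst u) <= sin alpha * ((fst z - fst s)*fst u + (snd z - snd s)*snd u) /\
  -(cos alpha * (-((fst z - fst s)*snd u) + (snd z - snd s)*fst u)) <= sin alpha * ((fst z - fst s)*fst u + (snd z - snd s)*snd u).
Proof.
  intros H0 H1 Hk Hm Hu [r [v [Hr [Hv [Ha Hz]]]]].
  apply unit_sq in Hv.
  subst z. unfold padd, pscale; simpl.
  destruct u as [u1 u2]; destruct v as [v1 v2]; destruct s as [s1 s2]; simpl in *.
  unfold angle, dot in Ha; simpl in Ha.
  set (c := v1*u1 + v2*u2) in *.
  set (d := -(v1*u2) + v2*u1).
  assert (cd : c*c + d*d = 1).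
  { unfold c, d. transitivity ((v1*v1+v2*v2)*(u1*u1+u2*u2)); [ring|]. rewrite Hv, Hu; ring. }
  assert (cb : -1 <= c <= 1) by nra.
  assert (ck : cos alpha <= c).
  { rewrite <- (cos_acos c cb). apply cos_decr_1; try lra; apply acos_bound. }
  assert (km : cos alpha * cos alpha + sin alpha * sin alpha = 1).
  { pose proof (sin2_cos2 alpha). unfold Rsqr in H. lra. }
  assert (dm : d*d <= sin alpha * sin alpha) by nra.
  assert (d1 : d <= sin alpha) by nra.
  assert (d2 : -(sin alpha) <= d) by nra.
  replace (s1 + r*v1 - s1) with (r*v1) by ring.
  replace (s2 + r*v2 - s2) with (r*v2) by ring.
  replace (r*v1*u1 + r*v2*u2) with (r*c) by (unfold c; ring).
  replace (-(r*v1*u2) + r*v2*u1) with (r*d) by (unfold d; ring).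
  assert (0 <= c) by lra.
  split; [nra|split].
  - assert (cos alpha * d <= cos alpha * sin alpha) by (apply Rmult_le_compat_l; lra).
    assert (sin alpha * cos alpha <= sin alpha * c) by (apply Rmult_le_compat_l; lra).
    assert (cos alpha * d <= sin alpha * c) by lra.
    nra.
  - assert (cos alpha * (-d) <= cos alpha * sin alpha) by (apply Rmult_le_compat_l; lra).
    assert (sin alpha * cos alpha <= sin alpha * c) by (apply Rmult_le_compat_l; lra).
    assert (-(cos alpha * d) <= sin alpha * c) by lra.
    nra.
Qed.


Lemma cam_cone k m u1 u2 G1 G2 w1 w2 :
  k*k+m*m=1 -> 0<=m -> m<=k -> u1*u1+u2*u2 = 1 ->
  0 <= G1*u1+G2*u2 -> k*(-(G1*u2)+G2*u1) <= m*(G1*u1+G2*u2) -> -(k*(-(G1*u2)+G2*u1)) <= m*(G1*u1+G2*u2) ->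
  0 <= w1*u1+w2*u2 -> k*(-(w1*u2)+w2*u1) <= m*(w1*u1+w2*u2) -> -(k*(-(w1*u2)+w2*u1)) <= m*(w1*u1+w2*u2) ->
  (k*k-m*m)*(w1*G2 - w2*G1) <= 2*k*m*(w1*G1+w2*G2) /\
  -((k*k-m*m)*(w1*G2 - w2*G1)) <= 2*k*m*(w1*G1+w2*G2) /\ 0 <= w1*G1+w2*G2.
Proof.
  intros Hkm Hm Hmk Hu c1 c2 c3 d1 d2 d3.
  destruct (cone k m (w1*u1+w2*u2) (-(w1*u2)+w2*u1) (G1*u1+G2*u2) (-(G1*u2)+G2*u1)) as [e1 [e2 e3]]; try lra.
  assert (I1: (w1*u1+w2*u2)*(-(G1*u2)+G2*u1) - (-(w1*u2)+w2*u1)*(G1*u1+G2*u2) = (w1*G2 - w2*G1)*(u1*u1+u2*u2)) by ring.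
  assert (I2: (w1*u1+w2*u2)*(G1*u1+G2*u2) + (-(w1*u2)+w2*u1)*(-(G1*u2)+G2*u1) = (w1*G1 + w2*G2)*(u1*u1+u2*u2)) by ring.
  rewrite Hu, Rmult_1_r in I1, I2. rewrite I1, I2 in *. lra.
Qed.

Lemma cam_ell k m u1 u2 G1 G2 w1 w2 v1 v2 rho :
  k*k+m*m=1 -> 0<=m -> m<=k -> u1*u1+u2*u2 = 1 ->
  0 <= G1*u1+G2*u2 -> k*(-(G1*u2)+G2*u1) <= m*(G1*u1+G2*u2) -> -(k*(-(G1*u2)+G2*u1)) <= m*(G1*u1+G2*u2) ->
  0 <= w1*u1+w2*u2 -> k*(-(w1*u2)+w2*u1) <= m*(w1*u1+w2*u2) -> -(k*(-(w1*u2)+w2*u1)) <= m*(w1*u1+w2*u2) ->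
  0 <= v1*u1+v2*u2 -> k*(-(v1*u2)+v2*u1) <= m*(v1*u1+v2*u2) -> -(k*(-(v1*u2)+v2*u1)) <= m*(v1*u1+v2*u2) ->
  w1*w1+w2*w2 <= rho*rho -> v1*v1+v2*v2 <= rho*rho -> 0 <= rho ->
  ((v1*G2 - v2*G1) - (w1*G2 - w2*G1))^2 <= 4*(m*m)*(rho*rho)*(G1*G1+G2*G2).
Proof.
  intros Hkm Hm Hmk Hu c1 c2 c3 d1 d2 d3 f1 f2 f3 r1 r2 r3.
  pose proof (ell_diff k m (w1*u1+w2*u2) (-(w1*u2)+w2*u1) (v1*u1+v2*u2) (-(v1*u2)+v2*u1)
     (G1*u1+G2*u2) (-(G1*u2)+G2*u1) rho) as H.
  assert (N: forall p1 p2, (p1*u1+p2*u2)*(p1*u1+p2*u2) + (-(p1*u2)+p2*u1)*(-(p1*u2)+p2*u1) = p1*p1+p2*p2).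
  { intros. transitivity ((p1*p1+p2*p2)*(u1*u1+u2*u2)); [ring|rewrite Hu; ring]. }
  assert (I: forall p1 p2, (p1*u1+p2*u2)*(-(G1*u2)+G2*u1) - (-(p1*u2)+p2*u1)*(G1*u1+G2*u2) = (p1*G2 - p2*G1)).
  { intros. transitivity ((p1*G2 - p2*G1)*(u1*u1+u2*u2)); [ring|rewrite Hu; ring]. }
  rewrite !I, !N in H. apply H; lra.
Qed.


Lemma fin_poly (k m a : R) : k*k+m*m=1 -> 0<=m -> m<=a -> a<1/4 -> 0<=k ->
  (k+m)*(k+m)*(1-4*a) <= (1+2*a)*(k*k)*((k-m)*(k-m)).
Proof.
  intros H1 H2 H3 H4 H5.
  assert (k <= 1) by nra.
  assert (km: k*m <= a) by nra.
  assert (0 <= k*m) by nra.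
  assert (E: (1+2*a)*(k*k)*((k-m)*(k-m)) - (k+m)*(k+m)*(1-4*a)
    = 6*a - 4*(k*m)*(1-a) - (1+2*a)*(m*m)*(1-2*(k*m))).
  { assert (kk: k*k = 1 - m*m) by lra.
    replace ((k-m)*(k-m)) with (k*k+m*m - 2*(k*m)) by ring.
    replace ((k+m)*(k+m)) with (k*k+m*m + 2*(k*m)) by ring. rewrite H1, kk. ring. }
  assert (m*m <= a*a) by nra.
  assert ((1+2*a)*(m*m)*(1-2*(k*m)) <= (1+2*a)*(a*a)).
  { assert (0 <= (1+2*a)*(m*m)) by nra.
    assert ((1+2*a)*(m*m)*(1-2*(k*m)) <= (1+2*a)*(m*m)) by nra.
    nra. }
  assert (4*(k*m)*(1-a) <= 4*a*(1-a)) by nra.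
  nra.
Qed.

Lemma final (k m a h L dd rho2 A B : R) :
  k*k+m*m=1 -> 0<=m -> m<=a -> a<1/4 -> 0<=a -> m<k -> 0<h ->
  L*(k-m) = h*(k+m) -> rho2*(h*h) = L*L*(L*L+h*h) ->
  A^2 <= 4*(m*m)*rho2*(L*L+h*h) -> B^2 <= 4*(m*m)*rho2*(L*L+h*h) ->
  2*(h*h)*dd <= A^2 + B^2 ->
  dd <= (1+2*a)/(1-4*a) * (2*h*(2*m*k)/(1-2*m*k))^2.
Proof.
  intros Hkm Hm Hma Ha Ha0 Hmk Hh HL Hr HA HB Hd.
  set (E := k - m) in *.
  assert (E0: 0 < E) by (unfold E; lra).
  assert (HL': L = h*(k+m)/E) by (field_simplify_eq; [lra|lra]).
  assert (hD: L*L+h*h = 2*(h*h)/(E*E)).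
  { rewrite HL'. field_simplify_eq; [|lra]. unfold E.
    replace ((k - m) * (k - m)) with (k*k+m*m - 2*k*m) by ring.
    nra. }
  assert (h1: h*h*(h*h)*dd <= 4*(m*m)*(L*L)*((L*L+h*h)*(L*L+h*h))).
  { assert (2*(h*h)*dd <= 8*(m*m)*rho2*(L*L+h*h)) by lra.
    assert (0 < h*h) by nra.
    assert (h*h*(h*h)*dd <= 4*(m*m)*(rho2*(h*h))*(L*L+h*h)) by nra.
    rewrite Hr in H1. nra. }
  rewrite hD, HL' in h1.
  assert (E2: 1 - 2*m*k = E*E) by (unfold E; nra).
  rewrite E2.
  assert (dd <= 16*(m*m)*(h*h)*((k+m)*(k+m))/(E^6)).
  { assert (0 < h*h*(h*h)) by (apply Rmult_lt_0_compat; apply Rmult_lt_0_compat; lra).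
    apply Rmult_le_reg_l with (h*h*(h*h)); auto.
    eapply Rle_trans; [apply h1|]. right. field. lra. }
  eapply Rle_trans; [apply H|].
  pose proof (fin_poly k m a Hkm Hm Hma Ha ltac:(lra)) as P.
  fold E in P.
  assert (Q0: 0 < 1 - 4*a) by lra.
  replace ((1 + 2 * a) / (1 - 4 * a) * (2 * h * (2 * m * k) / (E * E)) ^ 2)
    with (16*(m*m)*(h*h)*((1+2*a)*(k*k)*(E*E)) / ((1-4*a)*E^6)) by (field; lra).
  replace (16*(m*m)*(h*h)*((k+m)*(k+m))/(E^6)) with (16*(m*m)*(h*h)*((k+m)*(k+m)*(1-4*a)) / ((1-4*a)*E^6)) by (field; lra).
  apply Rmult_le_compat_r.
  - apply Rlt_le, Rinv_0_lt_compat. apply Rmult_lt_0_compat; auto. apply pow_lt; auto.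
  - apply Rmult_le_compat_l; [nra|]. exact P.
Qed.


Lemma scale (K M D2 c d P Q : R) : 0 < D2 -> K*D2 = P -> M*D2 = Q -> K*c <= M*d -> P*c <= Q*d.
Proof. intros. subst. nra. Qed.

Theorem lemma2 (h alpha : R) (hh : 0 < h) (ha0 : 0 <= alpha) (ha1 : alpha < 1/4) :
  let g : point := (0, 0) in
  let t := 2 * h / tan (PI / 4 - alpha) in
  let sp : point := (- t / 2, h) in
  let sq : point := (t / 2, h) in
  eps_le alpha g (fun s => s = sp \/ s = sq)
    (sqrt ((1 + 2 * alpha) / (1 - 4 * alpha)) * (2 * h * sin (2 * alpha) / (1 - sin (2 * alpha)))).
Proof.
  intros g t sp sq. unfold eps_le. intros u Hu x y Hx Hy.
  pose proof PI2_1 as Hpi.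
  set (k := cos alpha). set (m := sin alpha).
  assert (Hk0 : 0 <= k) by (apply cos_ge_0; lra).
  assert (Hm0 : 0 <= m) by (apply sin_ge_0; lra).
  assert (Hkm : k*k + m*m = 1).
  { pose proof (sin2_cos2 alpha). unfold Rsqr in H. unfold k, m. lra. }
  assert (Hma : m <= alpha).
  { destruct (Req_dec alpha 0) as [E|E]. unfold m; rewrite E, sin_0; lra.
    apply Rlt_le, sin_lt_x; lra. }
  assert (Hmk : m < k) by nra.
  assert (Htan : tan (PI/4 - alpha) = (k - m)/(k + m)).
  { unfold tan. rewrite sin_minus, cos_minus, sin_PI4, cos_PI4. fold k m.
    assert (0 < sqrt 2) by (apply sqrt_lt_R0; lra).
    field. split; [lra|]. 
    intro Z. assert (1/sqrt 2 * (k+m) = 0) by lra.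
    apply Rmult_integral in H0. destruct H0. 
    - unfold Rdiv in H0. rewrite Rmult_1_l in H0. apply Rinv_neq_0_compat in H0; lra.
    - lra. }
  set (L := h*(k+m)/(k-m)).
  assert (HL : L*(k-m) = h*(k+m)) by (unfold L; field; lra).
  assert (HL0 : h <= L) by nra.
  assert (Hsp : sp = (-L, h)).
  { unfold sp, t. rewrite Htan. f_equal. unfold L. field. split; lra. }
  assert (Hsq : sq = (L, h)).
  { unfold sq, t. rewrite Htan. f_equal. unfold L. field. split; lra. }
  assert (Ekm : k - m <> 0) by lra.
  assert (E1 : (k*k - m*m)*(L*L+h*h) = 2*L*h).
  { assert (Z: (k-m)*(k-m)*((k*k-m*m)*(L*L+h*h) - 2*L*h) = 0).
    { replace ((k-m)*(k-m)*((k*k-m*m)*(L*L+h*h) - 2*L*h)) with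
        ((k*k-m*m)*((L*(k-m))*(L*(k-m)) + h*h*((k-m)*(k-m))) - 2*(L*(k-m))*h*(k-m)) by ring.
      rewrite HL.
      replace ((k*k-m*m)*((h*(k+m))*(h*(k+m)) + h*h*((k-m)*(k-m))) - 2*(h*(k+m))*h*(k-m))
        with ((k*k-m*m)*h*h*(2*(k*k+m*m) - 2)) by ring. rewrite Hkm; ring. }
    apply Rmult_integral in Z. destruct Z as [Z|Z]; [apply Rmult_integral in Z; tauto|lra]. }
  assert (E2 : 2*k*m*(L*L+h*h) = L*L - h*h).
  { assert (Z: (k-m)*(k-m)*(2*k*m*(L*L+h*h) - (L*L - h*h)) = 0).
    { replace ((k-m)*(k-m)*(2*k*m*(L*L+h*h) - (L*L - h*h))) with
        (2*k*m*((L*(k-m))*(L*(k-m)) + h*h*((k-m)*(k-m))) - ((L*(k-m))*(L*(k-m)) - h*h*((k-m)*(k-m)))) by ring.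
      rewrite HL.
      replace (2*k*m*((h*(k+m))*(h*(k+m)) + h*h*((k-m)*(k-m))) - ((h*(k+m))*(h*(k+m)) - h*h*((k-m)*(k-m))))
        with (4*k*m*h*h*((k*k+m*m) - 1)) by ring. rewrite Hkm; ring. }
    apply Rmult_integral in Z. destruct Z as [Z|Z]; [apply Rmult_integral in Z; tauto|lra]. }
  assert (D0 : 0 < L*L+h*h) by nra.
  destruct (Hu sp (or_introl eq_refl)) as [Up Wgp].
  destruct (Hu sq (or_intror eq_refl)) as [Uq Wgq].
  pose proof (Hx sp (or_introl eq_refl)) as Wxp.
  pose proof (Hx sq (or_intror eq_refl)) as Wxq.
  pose proof (Hy sp (or_introl eq_refl)) as Wyp.
  pose proof (Hy sq (or_intror eq_refl)) as Wyq.
  apply unit_sq in Up. apply unit_sq in Uq.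
  assert (Hal : alpha <= PI) by lra.
  pose proof (lin_wedge alpha sp (u sp) g ha0 Hal Hk0 Hm0 Up Wgp) as [gp1 [gp2 gp3]].
  pose proof (lin_wedge alpha sp (u sp) x ha0 Hal Hk0 Hm0 Up Wxp) as [xp1 [xp2 xp3]].
  pose proof (lin_wedge alpha sp (u sp) y ha0 Hal Hk0 Hm0 Up Wyp) as [yp1 [yp2 yp3]].
  pose proof (lin_wedge alpha sq (u sq) g ha0 Hal Hk0 Hm0 Uq Wgq) as [gq1 [gq2 gq3]].
  pose proof (lin_wedge alpha sq (u sq) x ha0 Hal Hk0 Hm0 Uq Wxq) as [xq1 [xq2 xq3]].
  pose proof (lin_wedge alpha sq (u sq) y ha0 Hal Hk0 Hm0 Uq Wyq) as [yq1 [yq2 yq3]].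
  fold k in gp1, gp2, gp3, xp1, xp2, xp3, yp1, yp2, yp3, gq1, gq2, gq3, xq1, xq2, xq3, yq1, yq2, yq3.
  fold m in gp1, gp2, gp3, xp1, xp2, xp3, yp1, yp2, yp3, gq1, gq2, gq3, xq1, xq2, xq3, yq1, yq2, yq3.
  clear Hx Hy Hu Wgp Wgq Wxp Wxq Wyp Wyq.
  rewrite Hsp in *. rewrite Hsq in *.
  destruct (u (-L, h)) as [p1 p2]. destruct (u (L, h)) as [q1 q2].
  destruct x as [x1 x2]. destruct y as [y1 y2]. unfold g in *. simpl in *.
  assert (Hmk' : m <= k) by lra.
  destruct (cam_cone k m p1 p2 _ _ _ _ Hkm Hm0 Hmk' Up gp1 gp2 gp3 xp1 xp2 xp3) as [cxp1 [cxp2 cxp3]].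
  destruct (cam_cone k m p1 p2 _ _ _ _ Hkm Hm0 Hmk' Up gp1 gp2 gp3 yp1 yp2 yp3) as [cyp1 [cyp2 cyp3]].
  destruct (cam_cone k m q1 q2 _ _ _ _ Hkm Hm0 Hmk' Uq gq1 gq2 gq3 xq1 xq2 xq3) as [cxq1 [cxq2 cxq3]].
  destruct (cam_cone k m q1 q2 _ _ _ _ Hkm Hm0 Hmk' Uq gq1 gq2 gq3 yq1 yq2 yq3) as [cyq1 [cyq2 cyq3]].
  apply (scale _ _ _ _ _ _ _ D0 E1 E2) in cxp1, cyp1, cxq1, cyq1.
  assert (E1' : -(k*k - m*m)*(L*L+h*h) = -(2*L*h)) by lra.
  replace (-((k*k-m*m)*((x1 - - L) * (0 - h) - (x2 - h) * (0 - - L)))) with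
    (-(k*k-m*m)*((x1 - - L) * (0 - h) - (x2 - h) * (0 - - L))) in cxp2 by ring.
  replace (-((k*k-m*m)*((y1 - - L) * (0 - h) - (y2 - h) * (0 - - L)))) with
    (-(k*k-m*m)*((y1 - - L) * (0 - h) - (y2 - h) * (0 - - L))) in cyp2 by ring.
  replace (-((k*k-m*m)*((x1 - L) * (0 - h) - (x2 - h) * (0 - L)))) with
    (-(k*k-m*m)*((x1 - L) * (0 - h) - (x2 - h) * (0 - L))) in cxq2 by ring.
  replace (-((k*k-m*m)*((y1 - L) * (0 - h) - (y2 - h) * (0 - L)))) with
    (-(k*k-m*m)*((y1 - L) * (0 - h) - (y2 - h) * (0 - L))) in cyq2 by ring.
  apply (scale _ _ _ _ _ _ _ D0 E1' E2) in cxp2, cyp2, cxq2, cyq2.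
  assert (rxp : h*h*((x1+L)*(x1+L)+(h-x2)*(h-x2)) <= L*L*(L*L+h*h)).
  { apply (rho_b L h (x1+L) (h-x2) (L-x1)); try lra; nra. }
  assert (ryp : h*h*((y1+L)*(y1+L)+(h-y2)*(h-y2)) <= L*L*(L*L+h*h)).
  { apply (rho_b L h (y1+L) (h-y2) (L-y1)); try lra; nra. }
  assert (rxq : h*h*((L-x1)*(L-x1)+(h-x2)*(h-x2)) <= L*L*(L*L+h*h)).
  { apply (rho_b L h (L-x1) (h-x2) (x1+L)); try lra; nra. }
  assert (ryq : h*h*((L-y1)*(L-y1)+(h-y2)*(h-y2)) <= L*L*(L*L+h*h)).
  { apply (rho_b L h (L-y1) (h-y2) (y1+L)); try lra; nra. }
  set (rho := L * sqrt (L*L+h*h) / h).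
  assert (Hr2 : rho*rho*(h*h) = L*L*(L*L+h*h)).
  { unfold rho. pose proof (sqrt_sqrt (L*L+h*h) ltac:(lra)).
    field_simplify_eq; [|lra]. replace (sqrt (L*L+h*h) ^ 2) with (sqrt (L*L+h*h) * sqrt (L*L+h*h)) by ring.
    rewrite H. ring. }
  assert (Hr0 : 0 <= rho).
  { unfold rho. apply Rmult_le_pos; [apply Rmult_le_pos; [lra|apply sqrt_pos]|].
    apply Rlt_le, Rinv_0_lt_compat; lra. }
  assert (hh2 : 0 < h*h) by nra.
  assert (bxp : (x1 - - L)*(x1 - - L) + (x2 - h)*(x2 - h) <= rho*rho).
  { apply Rmult_le_reg_r with (h*h); auto. rewrite Hr2. nra. }
  assert (byp : (y1 - - L)*(y1 - - L) + (y2 - h)*(y2 - h) <= rho*rho).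
  { apply Rmult_le_reg_r with (h*h); auto. rewrite Hr2. nra. }
  assert (bxq : (x1 - L)*(x1 - L) + (x2 - h)*(x2 - h) <= rho*rho).
  { apply Rmult_le_reg_r with (h*h); auto. rewrite Hr2. nra. }
  assert (byq : (y1 - L)*(y1 - L) + (y2 - h)*(y2 - h) <= rho*rho).
  { apply Rmult_le_reg_r with (h*h); auto. rewrite Hr2. nra. }
  pose proof (cam_ell k m p1 p2 _ _ _ _ _ _ rho Hkm Hm0 Hmk' Up gp1 gp2 gp3 xp1 xp2 xp3 yp1 yp2 yp3 bxp byp Hr0) as EA.
  pose proof (cam_ell k m q1 q2 _ _ _ _ _ _ rho Hkm Hm0 Hmk' Uq gq1 gq2 gq3 xq1 xq2 xq3 yq1 yq2 yq3 bxq byq Hr0) as EB.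
  replace ((0 - - L) * (0 - - L) + (0 - h) * (0 - h)) with (L*L+h*h) in EA by ring.
  replace ((0 - L) * (0 - L) + (0 - h) * (0 - h)) with (L*L+h*h) in EB by ring.
  unfold dist, norm, dot, padd, pscale; simpl.
  rewrite sin_2a. fold k m.
  set (dd := (x1 + -1 * y1) * (x1 + -1 * y1) + (x2 + -1 * y2) * (x2 + -1 * y2)).
  assert (Hdd : dd <= (1+2*alpha)/(1-4*alpha) * (2*h*(2*m*k)/(1-2*m*k))^2).
  { refine (final k m alpha h L dd (rho*rho) _ _ Hkm Hm0 Hma ha1 ha0 Hmk hh HL Hr2 EA EB _).
    match goal with |- _ <= ?A ^ 2 + ?B ^ 2 =>
      assert (Eq : A^2 + B^2 = 2*(h*h)*((x1 + -1 * y1) * (x1 + -1 * y1)) + 2*(L*L)*((x2 + -1 * y2) * (x2 + -1 * y2))) by ring end.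
    rewrite Eq. unfold dd.
    assert (HhL: h*h <= L*L) by (apply Rmult_le_compat; lra).
    assert (Z: h*h*((x2 + -1 * y2) * (x2 + -1 * y2)) <= L*L*((x2 + -1 * y2) * (x2 + -1 * y2))).
    { apply Rmult_le_compat_r; [apply Rle_0_sqr|exact HhL]. }
    lra. }
  assert (E3 : 1 - 2*m*k = (k-m)*(k-m)).
  { replace ((k-m)*(k-m)) with (k*k+m*m - 2*m*k) by ring. rewrite Hkm. ring. }
  assert (Xp : 0 <= 2*h*(2*m*k)/(1-2*m*k)).
  { rewrite E3. apply Rmult_le_pos.
    - apply Rmult_le_pos; [lra|]. apply Rmult_le_pos; [apply Rmult_le_pos|]; lra.
    - apply Rlt_le, Rinv_0_lt_compat. apply Rmult_lt_0_compat; lra. }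
  assert (Qp : 0 <= (1+2*alpha)/(1-4*alpha)).
  { apply Rmult_le_pos; [lra|]. apply Rlt_le, Rinv_0_lt_compat. lra. }
  replace (2 * sin alpha * cos alpha) with (2*m*k) by reflexivity.
  rewrite <- (sqrt_pow2 _ Xp) at 1.
  rewrite <- sqrt_mult; auto; [|apply pow2_ge_0].
  apply sqrt_le_1_alt. exact Hdd.
Qed.
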